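(* Let $M$ be a left $R$-module which is semi-projective and $\pi$-projective, and let $S = \operatorname{End}_R(M)$ with Jacobson radical $\operatorname{Jac}(S)$. Then $S/\operatorname{Jac}(S)$ is von Neumann regular if and only if for each $f \in S$ the submodule $\operatorname{Im}(f)$ has a weak supplement in $M$.
   Context: Endomorphisms are written on the right of their arguments, so for $s,f\in S$ the product $sf$ means first $s$ then $f$, and $\operatorname{Hom}_R(M,N)$ is a left $S$-module for each submodule $N\subseteq M$ (viewed as a subset of $S$). $M$ is semi-projective if $Sf = \operatorname{Hom}_R(M, \operatorname{Im}(f))$ for every $f \in S$. $M$ is $\pi$-projective if for all submodules $N, L$ of $M$ with $M = N + L$ one has $S = \operatorname{Hom}_R(M,N) + \operatorname{Hom}_R(M,L)$. A submodule $N$ of $M$ is small in $M$ if $N + L \neq M$ for every proper submodule $L$ of $M$. A submodule $L$ of $M$ is a weak supplement of a submodule $N$ if $N + L = M$ and $N \cap L$ is small in $M$. *)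

(* Defs.v *)
From HB Require Import structures.
From mathcomp Require Import all_boot all_order all_algebra.
Set Implicit Arguments. Unset Strict Implicit. Unset Printing Implicit Defensive.
Import GRing.Theory.
Local Open Scope ring_scope.

(* Left R-modules are MathComp [lmodType R]; submodules are predicates
   [M -> Prop]; S = End_R(M) is the set of R-linear maps [M -> M].
   Endomorphisms act on the right: the product s f in S means "first s,
   then f", i.e. the function [f \o s]. *)

Section ModDefs.
Variables (R : pzRingType) (M : lmodType R).

Definition is_submodule (N : M -> Prop) : Prop :=
  [/\ N 0, (forall x y, N x -> N y -> N (x + y)) &
      (forall (r : R) x, N x -> N (r *: x))].

Definition is_end (f : M -> M) : Prop :=
  forall (r : R) (x y : M), f (r *: x + y) = r *: f x + f y.

Definition smul (s f : M -> M) : M -> M := fun x => f (s x).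

Definition Im (f : M -> M) : M -> Prop := fun y => exists x, f x = y.

(* Hom_R(M, N) viewed as a subset of S *)
Definition Hom_into (N : M -> Prop) (g : M -> M) : Prop :=
  is_end g /\ forall x, N (g x).

Definition sum_is_whole (N L : M -> Prop) : Prop :=
  forall m, exists n l, [/\ N n, L l & m = n + l].

Definition semi_projective : Prop :=
  forall f, is_end f ->
    forall g, Hom_into (Im f) g <-> exists2 s, is_end s & g = smul s f.

Definition pi_projective : Prop :=
  forall N L, is_submodule N -> is_submodule L -> sum_is_whole N L ->
    forall s, is_end s ->
      exists g h, [/\ Hom_into N g, Hom_into L h & s = g \+ h].

Definition small (N : M -> Prop) : Prop :=
  forall L, is_submodule L -> sum_is_whole N L -> forall m, L m.

Definition weak_supplement (N L : M -> Prop) : Prop :=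
  [/\ is_submodule L, sum_is_whole N L & small (fun x => N x /\ L x)].

Definition left_ideal (I : (M -> M) -> Prop) : Prop :=
  [/\ (forall a, I a -> is_end a), I (fun _ => 0),
      (forall a b, I a -> I b -> I (a \+ b)) &
      (forall s a, is_end s -> I a -> I (smul s a))].

Definition maximal_left_ideal (I : (M -> M) -> Prop) : Prop :=
  [/\ left_ideal I, (exists2 a, is_end a & ~ I a) &
      (forall J, left_ideal J -> (forall a, I a -> J a) ->
         (exists2 a, is_end a & ~ J a) -> forall a, J a -> I a)].

Definition Jac (a : M -> M) : Prop :=
  is_end a /\ forall I, maximal_left_ideal I -> I a.

(* S / Jac(S) is von Neumann regular: every coset a + Jac(S) has some
   b + Jac(S) with (a b a) + Jac(S) = a + Jac(S). *)
Definition quot_Jac_regular : Prop :=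
  forall a, is_end a -> exists2 b, is_end b &
    Jac (fun x => smul (smul a b) a x - a x).

End ModDefs.

(* Main.v *)
Require Import Defs.
From mathcomp Require Import all_boot all_order all_algebra.
From mathcomp Require Import boolp.
From mathcomp Require classical_sets.
Set Implicit Arguments. Unset Strict Implicit. Unset Printing Implicit Defensive.
Import GRing.Theory.
Local Open Scope ring_scope.

Section Helpers.
Variables (R : pzRingType) (M : lmodType R).

Lemma end0 (f : M -> M) : is_end f -> f 0 = 0.
Proof.
move=> H; have e := H 1 0 0; rewrite scaler0 add0r scale1r in e.
by rewrite -[LHS](addrK (f 0) (f 0)) -e subrr.
Qed.

Lemma endD (f : M -> M) : is_end f -> forall x y, f (x + y) = f x + f y.
Proof. by move=> H x y; have := H 1 x y; rewrite !scale1r; apply. Qed.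

Lemma endZ (f : M -> M) : is_end f -> forall r x, f (r *: x) = r *: f x.
Proof. by move=> H r x; have := H r x 0; rewrite (end0 H) !addr0; apply. Qed.

Lemma endN (f : M -> M) : is_end f -> forall x, f (- x) = - f x.
Proof. by move=> H x; rewrite -scaleN1r (endZ H) scaleN1r. Qed.

Lemma end_id : is_end (fun x : M => x).
Proof. by []. Qed.

Lemma end_comp (f g : M -> M) : is_end f -> is_end g -> is_end (fun x => g (f x)).
Proof. by move=> Hf Hg r x y; rewrite Hf Hg. Qed.

Lemma end_add (f g : M -> M) : is_end f -> is_end g -> is_end (f \+ g).
Proof.
move=> Hf Hg r x y /=; rewrite Hf Hg scalerDr.
by rewrite -!addrA; congr (_ + _); rewrite addrCA.
Qed.

Lemma end_zero : is_end (fun _ : M => 0).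
Proof. by move=> r x y; rewrite scaler0 addr0. Qed.

Lemma end_sub (f g : M -> M) : is_end f -> is_end g -> is_end (fun x => f x - g x).
Proof.
move=> Hf Hg r x y; rewrite Hf Hg scalerBr opprD.
by rewrite -!addrA; congr (_ + _); rewrite addrCA.
Qed.

Lemma Im_sub (f : M -> M) : is_end f -> is_submodule (Im f).
Proof.
move=> H; split.
- by exists 0; rewrite (end0 H).
- by move=> _ _ [x <-] [y <-]; exists (x + y); rewrite (endD H).
- by move=> r _ [x <-]; exists (r *: x); rewrite (endZ H).
Qed.

Lemma small_mono (N N' : M -> Prop) :
  (forall x, N' x -> N x) -> small N -> small N'.
Proof.
move=> sub sN L Ls sw; apply: sN Ls _ => m.
have [n [l [Nn Ll ->]]] := sw m; exists n, l; split; auto.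
Qed.

Lemma exists_max (K : (M -> M) -> Prop) :
  left_ideal K -> ~ K (fun x => x) ->
  exists I, maximal_left_ideal I /\ forall a, K a -> I a.
Proof.
move=> KI nKid.
pose P (I : (M -> M) -> Prop) :=
  [/\ left_ideal I, forall a, K a -> I a & ~ I (fun x => x)].
pose T := {I | P I}.
pose Rl := fun s t : T => `[< forall a, sval s a -> sval t a >].
have : exists t, forall s, Rl t s -> s = t.
  apply: classical_sets.Zorn.
  - by move=> s; apply/asboolP.
  - by move=> r s u /asboolP h1 /asboolP h2; apply/asboolP => a /h1/h2.
  - move=> [I PI] [J PJ] /asboolP /= h1 /asboolP /= h2; apply: eq_exist.
    by apply/funext => a; apply/propext; split; auto.
  - move=> A tot.
    pose U a := K a \/ exists2 I : T, A I & sval I a.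
    have PU : P U.
      case: KI => Kend K0 Kadd Ksm; split; [split| |].
      + move=> a [Ka| [I _ Ia]]; first exact: Kend.
        by case: (svalP I) => [[Iend _ _ _] _ _]; exact: Iend.
      + by left.
      + move=> a b [Ka|[I AI Ia]] [Kb|[J AJ Jb]].
        * by left; apply: Kadd.
        * right; exists J => //; case: (svalP J) => [[_ _ Jadd _] KJ _].
          by apply: Jadd => //; apply: KJ.
        * right; exists I => //; case: (svalP I) => [[_ _ Iadd _] KI' _].
          by apply: Iadd => //; apply: KI'.
        * have [/asboolP /= h|/asboolP /= h] := tot _ _ AI AJ.
            right; exists J => //; case: (svalP J) => [[_ _ Jadd _] KJ _].
            by apply: Jadd => //; apply: h.
          right; exists I => //; case: (svalP I) => [[_ _ Iadd _] KI' _].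
          by apply: Iadd => //; apply: h.
      + move=> s a se [Ka|[I AI Ia]].
          by left; apply: Ksm.
        right; exists I => //; case: (svalP I) => [[_ _ _ Ism] _ _].
        by apply: Ism.
      + by move=> b Kb; left.
      + move=> [//|[I _ Iid]]; case: (svalP I) => _ _ nI; exact: nI.
    exists (exist _ U PU) => s As; apply/asboolP => a sa /=; right; by exists s.
move=> [t tmax].
case: t tmax => I PI tmax /=; have [[Iend I0 Iadd Ism] KsubI nIid] := PI.
  exists I; split => //; split; first by split.
    by exists (fun x => x) => //; exact: end_id.
  move=> J Jl IJ [a aend nJa].
  have PJ : P J.
    split => //; first by move=> b Kb; apply: IJ; apply: KsubI.
    move=> Jid; apply: nJa; case: Jl => _ _ _ Jsm.
    exact: (Jsm a _ aend Jid).
  have /(congr1 sval) /= eJ := tmax (exist _ J PJ) (introT (asboolP _) IJ).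
  by move=> b; rewrite eJ.
Qed.

Lemma lemB (a s : M -> M) : Jac a -> is_end s ->
  exists2 t, is_end t & forall x, t x - a (s (t x)) = x.
Proof.
move=> [aend aJ] send.
pose h x := x - a (s x).
have hend : is_end h by apply: end_sub; [exact: end_id| exact: end_comp].
case: (pselect (exists2 t, is_end t & forall x, t x - a (s (t x)) = x)) => // nex.
exfalso.
pose K b := exists2 t, is_end t & b = (fun x => h (t x)).
have KI : left_ideal K.
  split.
  - by move=> b [t te ->]; apply: end_comp.
  - exists (fun _ => 0); first exact: end_zero.
    by apply/funext => x /=; rewrite (end0 hend).
  - move=> b c [t1 e1 ->] [t2 e2 ->]; exists (t1 \+ t2); first exact: end_add.
    by apply/funext => x /=; rewrite (endD hend).
  - move=> s' b s'e [t te ->]; exists (fun x => t (s' x)) => //.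
    exact: end_comp.
have nKid : ~ K (fun x => x).
  move=> [t te eq]; apply: nex; exists t => // x.
  have E := congr1 (fun F => F x) eq; exact: esym E.
have [I [[[Iend I0 Iadd Ism] [b be nIb] Imax] KI']] := exists_max KI nKid.
have Ia := aJ I (And3 (And4 Iend I0 Iadd Ism) (ex_intro2 _ _ b be nIb) Imax).
have Ih : I h by apply: KI'; exists (fun x => x) => //; exact: end_id.
have Isa : I (smul s a) := Ism s a send Ia.
have Iid : I (fun x => x).
  suff -> : (fun x => x) = h \+ smul s a by apply: Iadd.
  by apply/funext => x /=; rewrite /h /smul subrK.
by apply: nIb; exact: (Ism b _ be Iid).
Qed.

Lemma lemA (c : M -> M) : semi_projective M -> pi_projective M ->
  Jac c -> small (Im c).
Proof.
move=> sp pp cJ N Ns sw m.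
have cend := cJ.1.
have [g [h [gH hH e]]] := pp _ _ (Im_sub cend) Ns sw (fun x => x) end_id.
have [s se gs] := (sp c cend g).1 gH.
have [t te tP] := lemB cJ se.
have hy y : h y = y - c (s y).
  have /= E := congr1 (fun F => F y) e.
  rewrite gs /smul in E.
  by rewrite {2}E addrC addKr.
have := hH.2 (t m); by rewrite hy tP.
Qed.

Lemma lemC (j : M -> M) : semi_projective M -> is_end j -> small (Im j) -> Jac j.
Proof.
move=> sp je sj; split => // I [[Iend I0 Iadd Ism] [b be nIb] Imax].
apply: contrapT => nIj.
pose J a := exists i s, [/\ I i, is_end s & a = i \+ smul s j].
have Jl : left_ideal J.
  split.
  - move=> a [i [s [Ii se ->]]]; apply: end_add; [exact: Iend | exact: end_comp].
  - exists (fun _ => 0), (fun _ => 0); split => //; first exact: end_zero.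
    by apply/funext => x /=; rewrite /smul (end0 je) addr0.
  - move=> a1 a2 [i1 [s1 [Ii1 se1 ->]]] [i2 [s2 [Ii2 se2 ->]]].
    exists (i1 \+ i2), (s1 \+ s2); split; [exact: Iadd | exact: end_add |].
    by apply/funext => x /=; rewrite /smul (endD je) addrACA.
  - move=> s' a s'e [i [s [Ii se ->]]].
    exists (smul s' i), (smul s' s); split => //; [exact: Ism | exact: end_comp].
have IJ : forall a, I a -> J a.
  move=> a Ia; exists a, (fun _ => 0); split => //; first exact: end_zero.
  by apply/funext => x /=; rewrite /smul (end0 je) addr0.
case: (pselect (exists2 a, is_end a & ~ J a)) => [prop|nprop].
  apply: nIj; apply: (Imax J Jl IJ prop).
  exists (fun _ => 0), (fun x => x); split => //.
  by apply/funext => x /=; rewrite add0r.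
have [i [s [Ii se E]]] : J (fun x => x).
  by apply: contrapT => nJ; apply: nprop; exists (fun x => x) => //; exact: end_id.
have iend := Iend i Ii.
have Em m : m = i m + j (s m) by exact: (congr1 (fun F => F m) E).
have allI : forall m, Im i m.
  apply: sj; first exact: Im_sub.
  move=> m; exists (j (s m)), (i m); split; [by exists (s m)| by exists m|].
  by rewrite addrC -Em.
have [t te tE] := (sp i iend (fun x => x)).1 (conj end_id allI).
have Iid : I (fun x => x) by rewrite tE; exact: Ism.
by apply: nIb; exact: (Ism b _ be Iid).
Qed.

End Helpers.

Theorem mainTheorem3 (R : pzRingType) (M : lmodType R) :
  semi_projective M -> pi_projective M ->
  (quot_Jac_regular M <->
   forall f : M -> M, is_end f -> exists L, weak_supplement (Im f) L).
Proof.
move=> sp pp; split.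
- move=> reg f fe.
  have [b be cJ] := reg f fe.
  have bfe : is_end (fun x => x - f (b x)).
    by apply: end_sub; [exact: end_id | exact: end_comp].
  exists (Im (fun x => x - f (b x))); split.
  + exact: Im_sub.
  + move=> m; exists (f (b m)), (m - f (b m)); split.
    * by exists (b m).
    * by exists m.
    * by rewrite addrC subrK.
  + apply: small_mono (lemA sp pp cJ).
    move=> x [[y fy] [z ez]]; exists (- (b z + y)).
    have fbz : f (b z) = z - x by rewrite -ez opprB addrC subrK.
    rewrite /smul (endN fe (b z + y)) (endD fe) fbz fy subrK (endN be) (endN fe) fbz.
    by rewrite opprB opprK subrK.
- move=> W a ae.
  have [L [Ls sw sm]] := W a ae.
  have [g [h [gH hH e]]] := pp _ _ (Im_sub ae) Ls sw (fun x => x) (@end_id _ M).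
  have [s se gs] := (sp a ae g).1 gH.
  exists s => //.
  apply: lemC => //.
    apply: end_sub; last exact: ae.
    by apply: end_comp => //; apply: end_comp.
  apply: small_mono sm => _ [x <-]; split.
    by exists (s (a x) - x); rewrite (endD ae) (endN ae).
  have hend := hH.1.
  have E := congr1 (fun F => F (a x)) e; rewrite /= gs /smul in E.
  suff -> : smul (smul a s) a x - a x = h (- a x) by exact: hH.2.
  rewrite (endN hend) /smul {2}E opprD addrA subrr add0r.
  by [].
Qed.
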